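(* Assume a single budget constraint with costs $c_I>0$ for all $I\in\mathcal I$, $\Sigma$ symmetric positive definite, $a\neq0$ with $\operatorname{supp}(a)\subseteq\bigcup\mathcal I$. Let $\underline\nu^*\in\mathbb{R}^{\mathcal I}_{\ge0}$ minimize $V_1$ over real allocations with budget $1$, and for $B>0$ let $\underline n_{\mathrm{round}}=\lfloor B\underline\nu^*\rfloor$ (componentwise floor), let $\underline n^*_{\mathrm{frac}}$ minimize $V_B$ over real feasible allocations and $\underline n^*_{\mathrm{int}}$ minimize $V_B$ over integer feasible allocations. Then $\lim_{B\to\infty}B\,V_B(\underline n_{\mathrm{round}})=V_1(\underline\nu^* )=B\,V_B(\underline n^*_{\mathrm{frac}})$, and consequently \[ \lim_{B\to\infty}\frac{V_B(\underline n^*_{\mathrm{frac}})}{V_B(\underline n^*_{\mathrm{int}})}=1 . \]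
   Context: $\mathcal I$ is a collection of nonempty subsets of $\{1,\dots,k\}$; $P_I:\mathbb{R}^k\to\mathbb{R}^{|I|}$ the coordinate projection onto $I$; $\Sigma_I=P_I\Sigma P_I^\top$. For $\underline n\in\mathbb{R}^{\mathcal I}_{\ge0}$, $V_B(\underline n)=a^\top\big(\sum_In_IP_I^\top\Sigma_I^{-1}P_I\big)^\dagger a$ ($\dagger$ = Moore–Penrose pseudo-inverse); $\underline n$ is feasible for budget $B$ if $n_I\ge0$, $\sum_Ic_In_I\le B$, and $\operatorname{supp}(a)\subseteq\bigcup\{I:n_I>0\}$. *)

(* Defs.v *)
From HB Require Import structures.
From mathcomp Require Import all_boot all_order all_algebra.
From mathcomp Require Import all_classical all_reals all_analysis.
Set Implicit Arguments. Unset Strict Implicit. Unset Printing Implicit Defensive.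
Import Order.TTheory GRing.Theory Num.Theory.
Local Open Scope ring_scope.

Section Defs.
Variable R : realType.
Variable k : nat.

Definition is_MP_pinv (M X : 'M[R]_k) : Prop :=
  [/\ M *m X *m M = M, X *m M *m X = X, (M *m X)^T = M *m X & (X *m M)^T = X *m M].

Definition MP_pinv (M : 'M[R]_k) : 'M[R]_k := xget 0 [set X | is_MP_pinv M X].

(* coordinate projection P_I : R^k -> R^{|I|}, rows indexed by the elements of I
   in increasing order *)
Definition proj_mx (I : {set 'I_k}) : 'M[R]_(#|I|, k) :=
  \matrix_(i < #|I|, j < k) (enum_val i == j)%:R.

Definition Sigma_sub (Sigma : 'M[R]_k) (I : {set 'I_k}) : 'M[R]_#|I| :=
  proj_mx I *m Sigma *m (proj_mx I)^T.

Definition info_mx (calI : {set {set 'I_k}}) (Sigma : 'M[R]_k)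
  (n : {set 'I_k} -> R) : 'M[R]_k :=
  \sum_(I in calI) n I *: ((proj_mx I)^T *m invmx (Sigma_sub Sigma I) *m proj_mx I).

(* V(n) = a^T (info matrix)^dagger a   (V_B does not depend on B itself) *)
Definition Vvar (calI : {set {set 'I_k}}) (Sigma : 'M[R]_k) (a : 'cV[R]_k)
  (n : {set 'I_k} -> R) : R :=
  (a^T *m MP_pinv (info_mx calI Sigma n) *m a) 0 0.

Definition feasible (calI : {set {set 'I_k}}) (c : {set 'I_k} -> R) (a : 'cV[R]_k)
  (B : R) (n : {set 'I_k} -> R) : Prop :=
  [/\ forall I, I \in calI -> 0 <= n I,
      \sum_(I in calI) c I * n I <= B &
      forall j : 'I_k, a j 0 != 0 -> exists2 I, I \in calI & (j \in I) && (0 < n I)].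

Definition integral_alloc (calI : {set {set 'I_k}}) (n : {set 'I_k} -> R) : Prop :=
  forall I, I \in calI -> exists m : nat, n I = m%:R.

End Defs.

(* Main.v *)
Require Import Defs.
From HB Require Import structures.
From mathcomp Require Import all_boot all_order all_algebra.
From mathcomp Require Import all_classical all_reals all_analysis.
From mathcomp Require Import ring lra.
Import Order.TTheory GRing.Theory Num.Theory.
Import numFieldNormedType.Exports.
Local Open Scope classical_set_scope.
Local Open Scope ring_scope.
Section LA.
Variable R : realType.

Lemma sqcol_eq0 n (v : 'cV[R]_n) : (v^T *m v) 0 0 = 0 -> v = 0.
Proof.
rewrite mxE => H.
have P i : 0 <= v^T 0 i * v i 0 by rewrite mxE -expr2 sqr_ge0.
apply/matrixP => i j; rewrite (ord1 j) mxE.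
have := psumr_eq0P (P:=predT) (fun i _ => P i) H (i:=i) isT.
by rewrite mxE -expr2 => /eqP; rewrite sqrf_eq0 => /eqP.
Qed.

Lemma sqrow_eq0 n (v : 'rV[R]_n) : (v *m v^T) 0 0 = 0 -> v = 0.
Proof. move=> H; rewrite -[v]trmxK (@sqcol_eq0 _ v^T) ?trmx0 // trmxK; exact: H. Qed.

Lemma MP_exists k (M : 'M[R]_k) : M^T = M -> exists X, is_MP_pinv M X.
Proof.
move=> HM.
set Bm := row_base (kermx M).
have BM0 : Bm *m M = 0 by apply/eqP; rewrite -sub_kermx eq_row_base.
have HBm : forall v : 'rV_k, v *m M = 0 -> (v <= Bm)%MS.
  by move=> v vM; rewrite eq_row_base sub_kermx vM.
have Bfree : row_free Bm by apply: row_base_free.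
clearbody Bm.
set G := Bm *m Bm^T.
have Gu : G \in unitmx.
  rewrite -row_free_unit; apply: inj_row_free => v vG0.
  have : v *m Bm = 0.
    apply: sqrow_eq0; rewrite trmx_mul mulmxA -(mulmxA v) -/G vG0 mul0mx mxE.
    done.
  by move/eqP; rewrite mulmx_free_eq0 // => /eqP.
set K := Bm^T *m invmx G *m Bm.
have MBt : M *m Bm^T = 0 by apply: trmx_inj; rewrite trmx_mul trmxK HM BM0 trmx0.
have MK : M *m K = 0 by rewrite /K !mulmxA MBt !mul0mx.
have KM : K *m M = 0 by rewrite /K -mulmxA BM0 mulmx0.
have KK : K *m K = K.
  have -> : K *m K = Bm^T *m (invmx G *m G) *m invmx G *m Bm by rewrite /K /G !mulmxA.
  by rewrite mulVmx // mulmx1.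
have KT : K^T = K.
  by rewrite /K !trmx_mul trmxK trmx_inv /G trmx_mul trmxK !mulmxA.
have Uu : (M + K) \in unitmx.
  rewrite -row_free_unit; apply: inj_row_free => v vMK.
  have vK : v *m K = 0.
    have := congr1 (mulmx^~ K) vMK; rewrite mul0mx -mulmxA mulmxDl MK KK add0r.
    done.
  have vM : v *m M = 0 by move: vMK; rewrite mulmxDr vK addr0.
  have := HBm v vM.
  case/submxP => u Hu.
  have : v *m K = v.
    rewrite Hu.
    have -> : u *m Bm *m K = u *m (G *m invmx G) *m Bm by rewrite /K /G !mulmxA.
    by rewrite mulmxV // mulmx1.
  by rewrite vK => <-.
set Y := invmx (M + K).
have KY : K *m Y = K.
  have E : K *m (M + K) = K by rewrite mulmxDr KM KK add0r.
  by rewrite -{1}E -mulmxA mulmxV // mulmx1.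
have YK : Y *m K = K.
  have E : (M + K) *m K = K by rewrite mulmxDl MK KK add0r.
  by rewrite -{1}E mulmxA mulVmx // mul1mx.
have MY : M *m Y = 1%:M - K.
  have := mulmxV Uu; rewrite -/Y mulmxDl KY => <-; by rewrite addrK.
have YM : Y *m M = 1%:M - K.
  have := mulVmx Uu; rewrite -/Y mulmxDr YK => <-; by rewrite addrK.
exists (Y - K).
have MX : M *m (Y - K) = 1%:M - K by rewrite mulmxBr MY MK subr0.
have XM : (Y - K) *m M = 1%:M - K by rewrite mulmxBl YM KM subr0.
have KX : K *m (Y - K) = 0 by rewrite mulmxBr KY KK subrr.
split.
- by rewrite MX mulmxBl mul1mx KM subr0.
- by rewrite XM mulmxBl mul1mx KX subr0.
- by rewrite MX linearB /= trmx1 KT.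
- by rewrite XM linearB /= trmx1 KT.
Qed.

Variable k : nat.
Variable calI : {set {set 'I_k}}.
Variable Sigma : 'M[R]_k.
Hypothesis HS : Sigma^T = Sigma.
Hypothesis HPD : forall x : 'cV[R]_k, x != 0 -> 0 < (x^T *m Sigma *m x) 0 0.

Definition q m (M : 'M[R]_m) (x : 'cV[R]_m) := (x^T *m M *m x) 0 0.
Arguments q {m}.
Definition T I := (@Defs.proj_mx R k I)^T *m invmx (Sigma_sub Sigma I) *m @Defs.proj_mx R k I.

Lemma PPt I : @Defs.proj_mx R k I *m (@Defs.proj_mx R k I)^T = 1%:M.
Proof.
apply/matrixP => i i'; rewrite !mxE (bigD1 (enum_val i)) //= big1.
  rewrite !mxE eqxx mul1r addr0 (inj_eq enum_val_inj) eq_sym.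
  by [].
by move=> j /negbTE Hj; rewrite !mxE eq_sym Hj mul0r.
Qed.

Lemma Pcol I (x : 'cV[R]_k) i : (@Defs.proj_mx R k I *m x) i 0 = x (enum_val i) 0.
Proof.
rewrite mxE (bigD1 (enum_val i)) //= big1 ?mxE ?eqxx ?mul1r ?addr0 //.
by move=> j /negbTE Hj; rewrite mxE eq_sym Hj mul0r.
Qed.

Lemma SsubT I : (Sigma_sub Sigma I)^T = Sigma_sub Sigma I.
Proof. by rewrite /Sigma_sub !trmx_mul trmxK HS mulmxA. Qed.

Lemma q_Ssub I z : q (Sigma_sub Sigma I) z = q Sigma ((@Defs.proj_mx R k I)^T *m z).
Proof. by rewrite /q /Sigma_sub trmx_mul trmxK !mulmxA. Qed.

Lemma Ssub_pd I z : z != 0 -> 0 < q (Sigma_sub Sigma I) z.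
Proof.
move=> z0; rewrite q_Ssub; apply: HPD; apply: contra z0 => /eqP H.
by rewrite -(mul1mx z) -PPt -mulmxA H mulmx0.
Qed.

Lemma Ssub_unit I : Sigma_sub Sigma I \in unitmx.
Proof.
rewrite -row_free_unit; apply: inj_row_free => v vS.
apply/eqP; apply: contraT => v0.
have : 0 < q (Sigma_sub Sigma I) v^T by apply: Ssub_pd; rewrite trmx_eq0.
by rewrite /q trmxK vS mul0mx mxE ltxx.
Qed.

Lemma q_T I x : q (T I) x =
  q (Sigma_sub Sigma I) (invmx (Sigma_sub Sigma I) *m (@Defs.proj_mx R k I *m x)).
Proof.
set S := Sigma_sub Sigma I; set u := @Defs.proj_mx R k I *m x.
have Su : S *m (invmx S *m u) = u by rewrite mulmxA mulmxV ?Ssub_unit // mul1mx.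
rewrite /q trmx_mul trmx_inv SsubT -/S.
have -> : x^T *m T I *m x = u^T *m invmx S *m u by rewrite /u /T trmx_mul !mulmxA.
by rewrite -(mulmxA _ S) Su.
Qed.

Lemma T_psd I x : 0 <= q (T I) x.
Proof.
rewrite q_T; set z := (X in q _ X); have [->|z0] := eqVneq z 0.
  by rewrite /q mulmx0 mxE.
exact/ltW/Ssub_pd.
Qed.

Lemma T_q0 I x : q (T I) x = 0 -> @Defs.proj_mx R k I *m x = 0.
Proof.
rewrite q_T; set z := (X in q _ X) => H.
have z0 : z = 0.
  apply/eqP; apply: contraT => z0; have := @Ssub_pd I z z0; by rewrite H ltxx.
have := congr1 (mulmx (Sigma_sub Sigma I)) z0.
by rewrite mulmx0 /z mulmxA mulmxV ?Ssub_unit // mul1mx.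
Qed.

Lemma T_q0_coord (I : {set 'I_k}) x (j : 'I_k) : j \in I -> q (T I) x = 0 -> x j 0 = 0.
Proof.
move=> jI /T_q0 H; have := congr1 (fun M : 'M[R]_(#|I|,1) => M (enum_rank_in jI j) 0) H.
by rewrite Pcol enum_rankK_in // mxE.
Qed.

Lemma T_q0_mul I x : q (T I) x = 0 -> T I *m x = 0.
Proof. by move/T_q0 => H; rewrite /T -mulmxA H mulmx0. Qed.

Lemma TT I : (T I)^T = T I.
Proof. by rewrite /T !trmx_mul trmxK trmx_inv SsubT mulmxA. Qed.

Definition info n := info_mx calI Sigma n.

Lemma infoE n : info n = \sum_(I in calI) n I *: T I.
Proof. by []. Qed.

Lemma info_q n x : q (info n) x = \sum_(I in calI) n I * q (T I) x.
Proof.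
rewrite /q infoE mulmx_sumr mulmx_suml summxE; apply: eq_bigr => I _.
by rewrite -scalemxAr -scalemxAl mxE.
Qed.

Lemma info_T n : (info n)^T = info n.
Proof.
apply/matrixP => i j; rewrite mxE infoE !summxE; apply: eq_bigr => I _.
have E : T I j i = T I i j by rewrite -{2}(TT I) [(T I)^T i j]mxE.
by rewrite [LHS]mxE [RHS]mxE E.
Qed.

Lemma info_scale t n : info (fun I => t * n I) = t *: info n.
Proof.
by rewrite !infoE scaler_sumr; apply: eq_bigr => I _; rewrite scalerA.
Qed.

Lemma info_mulE n (x : 'cV[R]_k) : info n *m x = \sum_(I in calI) n I *: (T I *m x).
Proof.
by rewrite infoE mulmx_suml; apply: eq_bigr => I _; rewrite -scalemxAl.
Qed.

Lemma info_psd n x : (forall I, I \in calI -> 0 <= n I) -> 0 <= q (info n) x.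
Proof.
move=> n0; rewrite info_q sumr_ge0 // => I HI; by rewrite mulr_ge0 ?n0 ?T_psd.
Qed.

Lemma info_q0 n x : (forall I, I \in calI -> 0 <= n I) -> q (info n) x = 0 ->
  forall I, I \in calI -> 0 < n I -> q (T I) x = 0.
Proof.
move=> n0; rewrite info_q => H I HI nI.
have := psumr_eq0P (P := fun I => I \in calI) (F := fun I => n I * q (T I) x) _ H HI.
move=> /(_ _)/eqP; rewrite mulf_eq0 gt_eqF //= => /(_ _)/eqP; apply.
by move=> J HJ; rewrite mulr_ge0 ?n0 ?T_psd.
Qed.

Variable a : 'cV[R]_k.
Definition V n := Vvar calI Sigma a n.
Definition pos (n : {set 'I_k} -> R) := forall I, I \in calI -> 0 <= n I.
Definition cov (n : {set 'I_k} -> R) := forall j : 'I_k, a j 0 != 0 ->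
  exists2 I, I \in calI & (j \in I) && (0 < n I).

Lemma pinvP n : is_MP_pinv (info n) (MP_pinv (info n)).
Proof. apply: (xgetPex 0 (P:=[set X | is_MP_pinv (info n) X])). exact: MP_exists (info_T n). Qed.

Lemma scal_sym m (M : 'M[R]_m) (x y : 'cV[R]_m) : M^T = M ->
  (x^T *m M *m y) 0 0 = (y^T *m M *m x) 0 0.
Proof.
move=> HM; have E (A : 'M[R]_1) : A 0 0 = A^T 0 0 by rewrite mxE.
by rewrite E !trmx_mul trmxK HM mulmxA.
Qed.

Lemma Vform n w : info n *m w = a -> V n = q (info n) w.
Proof.
move=> Hw; case: (pinvP n) => H1 _ _ _.
rewrite /V /Vvar -/(info n) -Hw trmx_mul info_T /q.
set M := info n; set X := MP_pinv M.
have -> : w^T *m M *m X *m (M *m w) = w^T *m (M *m X *m M) *m w by rewrite !mulmxA.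
by rewrite H1.
Qed.

Lemma cover_range n : pos n -> cov n -> exists w, info n *m w = a.
Proof.
move=> n0 nc; case: (pinvP n) => H1 _ H3 _.
set M := info n in H1 H3 *; set X := MP_pinv M in H1 H3 *.
set P := M *m X in H3 *.
have MT : M^T = M by apply: info_T.
have MP : M *m P = M.
  by rewrite -{1}MT -H3 -trmx_mul /P H1 MT.
have PP : P *m P = P by rewrite /P mulmxA H1.
set y := a - P *m a.
have My : M *m y = 0 by rewrite /y mulmxBr mulmxA MP subrr.
have qy : q M y = 0 by rewrite /q -mulmxA My mulmx0 mxE.
have yj j : a j 0 != 0 -> y j 0 = 0.
  move=> /nc [I HI /andP [jI nI]].
  exact: (@T_q0_coord I y j jI (@info_q0 n y n0 qy I HI nI)).
have ya : (y^T *m a) 0 0 = 0.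
  rewrite mxE big1 // => j _; rewrite mxE.
  by have [->|/yj ->] := eqVneq (a j 0) 0; rewrite ?mulr0 ?mul0r.
have Py : P *m y = 0 by rewrite /y mulmxBr mulmxA PP subrr.
have yP : y^T *m P = 0 by rewrite -H3 -trmx_mul Py trmx0.
have yy : (y^T *m y) 0 0 = 0.
  by rewrite {2}/y mulmxBr mulmxA yP mul0mx subr0.
have y0 := @sqcol_eq0 _ y yy.
exists (X *m a); rewrite mulmxA -/P; apply/eqP; rewrite eq_sym -subr_eq0.
by rewrite -/y y0.
Qed.

Lemma q_info0 n w : pos n -> q (info n) w = 0 -> info n *m w = 0.
Proof.
move=> n0 H; rewrite info_mulE big1 // => I HI.
have := n0 I HI; rewrite le_eqVlt => /orP [/eqP <-|nI]; first by rewrite scale0r.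
by rewrite (@T_q0_mul I w (@info_q0 n w n0 H I HI nI)) scaler0.
Qed.

Lemma q_scale m (M : 'M[R]_m) (t s : R) w : q (t *: M) (s *: w) = t * s * s * q M w.
Proof.
rewrite /q.
have -> : (s *: w)^T = s *: w^T by apply/matrixP => i j; rewrite !mxE.
rewrite -?scalemxAr -?scalemxAl -?scalemxAr -?scalemxAl -?scalemxAr -?scalemxAl.
by rewrite !mxE !mulrA (mulrC s t).
Qed.

Lemma V_scale n t : pos n -> cov n -> 0 < t -> V (fun I => t * n I) = V n / t.
Proof.
move=> n0 nc t0; have [w Hw] := @cover_range n n0 nc.
have Hw' : info (fun I => t * n I) *m (t^-1 *: w) = a.
  by rewrite info_scale -scalemxAl -scalemxAr scalerA mulfV ?gt_eqF // scale1r.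
rewrite (@Vform _ _ Hw') (@Vform _ _ Hw) info_scale q_scale.
by rewrite (mulrC _ (q _ _)) mulfV ?gt_eqF // mul1r.
Qed.

Lemma V_mono n m w : pos m -> (forall I, I \in calI -> m I <= n I) -> cov n ->
  info m *m w = a -> V n <= q (info m) w.
Proof.
move=> m0 mn nc Hw.
have n0 : pos n by move=> I HI; apply: le_trans (m0 I HI) (mn I HI).
have [z Hz] := @cover_range n n0 nc; rewrite (@Vform _ _ Hz).
set M := info m in Hw *; set N := info n in Hz *.
have MT : M^T = M by apply: info_T.
have qwz := @info_psd m (w - z) m0; rewrite -/M in qwz.
have e1 : (z^T *m M *m w) 0 0 = q N z by rewrite -mulmxA Hw -Hz /q mulmxA.
have e2 : q M z <= q N z.
  rewrite !info_q; apply: ler_sum => I HI; apply: ler_wpM2r; last exact: mn.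
  exact: T_psd.
have E : q M (w - z) = q M w - 2 * (z^T *m M *m w) 0 0 + q M z.
  rewrite /q; have -> : (w - z)^T = w^T - z^T by apply/matrixP => i j; rewrite !mxE.
  have sE (A B : 'M[R]_1) : (A - B) 0 0 = A 0 0 - B 0 0 by rewrite !mxE.
  rewrite !(mulmxBl, mulmxBr) !sE (@scal_sym _ M w z MT).
  rewrite mulr2n mulrDl !mul1r; lra.
move: qwz; rewrite E e1; lra.
Qed.

Variable c : {set 'I_k} -> R.
Variable nu : {set 'I_k} -> R.
Hypothesis hc : forall I, I \in calI -> 0 < c I.
Hypothesis a0 : a != 0.
Hypothesis nuF : feasible calI c a 1 nu.
Hypothesis nuopt : forall m, feasible calI c a 1 m -> V nu <= V m.

Lemma nu_pos : pos nu. Proof. by case: nuF. Qed.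
Lemma nu_cov : cov nu. Proof. by case: nuF. Qed.

Lemma v_pos : 0 < V nu.
Proof.
have [w Hw] := @cover_range nu nu_pos nu_cov.
rewrite (@Vform _ _ Hw) lt_def (@info_psd nu w nu_pos) andbT.
apply: contra a0 => /eqP H; by rewrite -Hw (@q_info0 nu w nu_pos H).
Qed.

Definition S := \sum_(I in calI) (nu I)^-1.
Definition fl (B : R) := fun I => ((Num.floor (B * nu I))%:~R : R).

Lemma S_ge0 : 0 <= S.
Proof. by rewrite sumr_ge0 // => I HI; rewrite invr_ge0 nu_pos. Qed.

Lemma S_ge I : I \in calI -> (nu I)^-1 <= S.
Proof.
move=> HI; rewrite /S (bigD1 I) //= lerDl sumr_ge0 // => J /andP [HJ _].
by rewrite invr_ge0 nu_pos.
Qed.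

Lemma feas_scale B n t : 0 < t -> feasible calI c a B n ->
  feasible calI c a (t * B) (fun I => t * n I).
Proof.
move=> t0 [n0 nb nc]; split.
- by move=> I HI; apply: mulr_ge0; [exact: ltW | exact: n0].
- rewrite (eq_bigr (fun I => t * (c I * n I))) => [|I _]; last by rewrite mulrCA.
  by rewrite -mulr_sumr ler_wpM2l ?(ltW t0).
- move=> j /nc [I HI /andP [jI nI]]; exists I; first exact: HI.
  by rewrite jI /= mulr_gt0.
Qed.

Lemma key B : S < B ->
  [/\ feasible calI c a B (fl B), integral_alloc calI (fl B),
      V nu <= B * V (fl B) & V (fl B) <= V nu / (B - S)].
Proof.
move=> SB; have B0 : 0 < B by apply: le_lt_trans S_ge0 SB.
set nB := fun I => fl B I / B.
set t := 1 - S / B.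
have t0 : 0 < t by rewrite /t subr_gt0 ltr_pdivrMr // mul1r.
have h1 I : I \in calI -> nB I <= nu I.
  move=> HI; rewrite /nB /fl ler_pdivrMr // mulrC; exact: floor_le.
have h2 I : I \in calI -> t * nu I <= nB I.
  move=> HI; rewrite /nB /fl; have := nu_pos I HI; rewrite le_eqVlt => /orP [/eqP <-|nI].
    by rewrite !mulr0 floor0 mul0r.
  have Hf := floorD1_gt (B * nu I); rewrite intrD in Hf.
  have HSI := @S_ge I HI.
  have e : 1 <= S * nu I by rewrite -(mulVf (negbT (gt_eqF nI))) ler_wpM2r // ltW.
  rewrite ler_pdivlMr // /t mulrBl mul1r mulrBl.
  have -> : S / B * nu I * B = S * nu I by field; rewrite gt_eqF.
  lra.
have nBpos : pos nB by move=> I HI; apply: le_trans (h2 I HI); rewrite mulr_ge0 ?nu_pos // ltW.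
have nBcov : cov nB.
  move=> j /nu_cov [I HI /andP [jI nI]]; exists I => //; rewrite jI /=.
  by apply: lt_le_trans (h2 I HI); rewrite mulr_gt0.
have nBF : feasible calI c a 1 nB.
  split => //; case: nuF => _ Hb _; apply: le_trans Hb.
  by apply: ler_sum => I HI; rewrite ler_wpM2l ?h1 // ltW ?hc.
have flE : fl B = fun I => B * nB I.
  by apply: boolp.funext => I; rewrite /nB mulrC mulfVK // gt_eqF.
have VflE : B * V (fl B) = V nB.
  by rewrite flE V_scale // mulrC mulfVK // gt_eqF.
have Vm : V nB <= V nu / t.
  have [w Hw] := @cover_range nu nu_pos nu_cov.
  have Hw' : info (fun I => t * nu I) *m (t^-1 *: w) = a.
    by rewrite info_scale -scalemxAl -scalemxAr scalerA mulfV ?gt_eqF // scale1r.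
  have mpos : pos (fun I => t * nu I) by move=> I HI; rewrite mulr_ge0 ?nu_pos // ltW.
  have := @V_mono nB _ _ mpos h2 nBcov Hw'.
  by rewrite -(@Vform _ _ Hw') (@V_scale nu t nu_pos nu_cov t0).
split.
- by have := @feas_scale 1 nB B B0 nBF; rewrite mulr1 flE.
- move=> I HI; exists `|Num.floor (B * nu I)|%N.
  by rewrite /fl natr_absz ger0_norm // floor_ge0 mulr_ge0 ?nu_pos // ltW.
- by rewrite VflE; apply: nuopt.
- have : B * V (fl B) <= V nu / t by rewrite VflE.
  have -> : V nu / t = B * (V nu / (B - S)).
    rewrite /t; field; rewrite ?gt_eqF // ?subr_gt0 //.
  by rewrite ler_pM2l.
Qed.

Lemma part2 (nfrac : R -> {set 'I_k} -> R) :
  (forall B, 0 < B -> feasible calI c a B (nfrac B) /\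
     forall m, feasible calI c a B m -> V (nfrac B) <= V m) ->
  forall B, 0 < B -> B * V (nfrac B) = V nu.
Proof.
move=> Hfr B B0; have [Ff fopt] := Hfr B B0.
have iB0 : 0 < B^-1 by rewrite invr_gt0.
have Ff' := Ff; case: Ff' => f0 _ fc.
apply/eqP; rewrite eq_le; apply/andP; split.
- have F := @feas_scale 1 nu B B0 nuF; rewrite mulr1 in F.
  have := fopt _ F; rewrite (@V_scale nu B nu_pos nu_cov B0) ler_pdivlMr //.
  by rewrite mulrC.
- have F := @feas_scale B (nfrac B) B^-1 iB0 Ff.
  rewrite mulVf ?gt_eqF // in F.
  have := nuopt _ F; rewrite (@V_scale (nfrac B) B^-1 f0 fc iB0) invrK.
  by rewrite mulrC.
Qed.

Lemma part1 : (fun B => B * V (fl B)) @ +oo --> V nu.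
Proof.
apply/cvgrPdist_le => e e0.
have v0 := v_pos; have S0 := S_ge0.
near=> B.
have HB : S + V nu * S / e + 1 < B by near: B; apply: nbhs_pinfty_gt; exact: num_real.
have vSe : 0 <= V nu * S / e by rewrite divr_ge0 ?mulr_ge0 // ltW.
have SB : S < B by lra.
have [_ _ lb ub] := @key B SB.
rewrite ler0_norm ?subr_le0 // opprB.
have BS0 : 0 < B - S by rewrite subr_gt0.
have h1 : B * V (fl B) <= B * (V nu / (B - S)) by rewrite ler_pM2l //; lra.
have h2 : B * (V nu / (B - S)) - V nu = V nu * S / (B - S) by field; rewrite gt_eqF.
have h3 : V nu * S / (B - S) <= e.
  rewrite ler_pdivrMr //.
  have : V nu * S / e <= B - S by lra.
  rewrite ler_pdivrMr // => H; lra.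
lra.
Unshelve. all: by end_near.
Qed.

Lemma part3 (nfrac nint : R -> {set 'I_k} -> R) :
  (forall B, 0 < B -> feasible calI c a B (nfrac B) /\
     forall m, feasible calI c a B m -> V (nfrac B) <= V m) ->
  (forall B, 0 < B ->
     (exists m, feasible calI c a B m /\ integral_alloc calI m) ->
     [/\ feasible calI c a B (nint B), integral_alloc calI (nint B) &
       forall m, feasible calI c a B m -> integral_alloc calI m ->
         V (nint B) <= V m]) ->
  (fun B => V (nfrac B) / V (nint B)) @ +oo --> (1 : R).
Proof.
move=> Hfr Hint; apply/cvgrPdist_le => e e0.
have v0 := v_pos; have S0 := S_ge0.
near=> B.
have HB : S + S / e + 1 < B by near: B; apply: nbhs_pinfty_gt; exact: num_real.
have Se : 0 <= S / e by rewrite divr_ge0 // ltW.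
have SB : S < B by lra.
have B0 : 0 < B by lra.
have BS0 : 0 < B - S by rewrite subr_gt0.
have [Ffl Ifl _ ub] := @key B SB.
have [nF _ nopt] := Hint B B0 (ex_intro _ (fl B) (conj Ffl Ifl)).
have [_ fopt] := Hfr B B0.
have Vf : V (nfrac B) = V nu / B.
  by rewrite -(@part2 nfrac Hfr B B0) mulrC mulKf // gt_eqF.
have x1 : V (nint B) <= V nu / (B - S) by apply: le_trans (nopt _ Ffl Ifl) ub.
have x2 : V nu / B <= V (nint B) by rewrite -Vf; apply: fopt.
have vB : 0 < V nu / B by rewrite divr_gt0.
have x0 : 0 < V (nint B) by apply: lt_le_trans x2.
rewrite Vf.
have g1 : V nu / B / V (nint B) <= 1 by rewrite ler_pdivrMr // mul1r.
have g2 : (B - S) / B <= V nu / B / V (nint B).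
  rewrite ler_pdivlMr // mulrAC ler_pM2r ?invr_gt0 //.
  by move: x1; rewrite ler_pdivlMr // mulrC.
have g3 : 1 - (B - S) / B = S / B by field; rewrite gt_eqF.
have g4 : S / B <= e.
  rewrite ler_pdivrMr //.
  have : S / e <= B by lra.
  by rewrite ler_pdivrMr // mulrC.
rewrite ger0_norm ?subr_ge0 //; lra.
Unshelve. all: by end_near.
Qed.
End LA.

Theorem mainTheorem7 (R : realType) (k : nat)
  (calI : {set {set 'I_k}}) (c : {set 'I_k} -> R)
  (Sigma : 'M[R]_k) (a : 'cV[R]_k)
  (nu : {set 'I_k} -> R) (nfrac nint : R -> {set 'I_k} -> R) :
  (forall I, I \in calI -> I != finset.set0) ->
  (forall I, I \in calI -> 0 < c I) ->
  Sigma^T = Sigma ->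
  (forall x : 'cV[R]_k, x != 0 -> 0 < (x^T *m Sigma *m x) 0 0) ->
  a != 0 ->
  (forall j : 'I_k, a j 0 != 0 -> exists2 I, I \in calI & j \in I) ->
  (* nu minimizes V_1 over real feasible allocations with budget 1 *)
  feasible calI c a 1 nu ->
  (forall m, feasible calI c a 1 m -> Vvar calI Sigma a nu <= Vvar calI Sigma a m) ->
  (* nfrac B minimizes V_B over real feasible allocations with budget B *)
  (forall B, 0 < B -> feasible calI c a B (nfrac B) /\
     forall m, feasible calI c a B m ->
       Vvar calI Sigma a (nfrac B) <= Vvar calI Sigma a m) ->
  (* nint B minimizes V_B over integer feasible allocations (whenever any exists) *)
  (forall B, 0 < B ->
     (exists m, feasible calI c a B m /\ integral_alloc calI m) ->
     [/\ feasible calI c a B (nint B), integral_alloc calI (nint B) &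
       forall m, feasible calI c a B m -> integral_alloc calI m ->
         Vvar calI Sigma a (nint B) <= Vvar calI Sigma a m]) ->
  [/\ (fun B : R => B * Vvar calI Sigma a (fun I => (Num.floor (B * nu I))%:~R))
        @ +oo --> Vvar calI Sigma a nu,
      (forall B, 0 < B -> B * Vvar calI Sigma a (nfrac B) = Vvar calI Sigma a nu) &
      (fun B : R => Vvar calI Sigma a (nfrac B) / Vvar calI Sigma a (nint B))
        @ +oo --> (1 : R)].
Proof.
move=> _ hc HS HPD a0 _ nuF nuopt Hfr Hint; split.
- exact: (@part1 R k calI Sigma HS HPD a c nu hc a0 nuF nuopt).
- exact: (@part2 R k calI Sigma HS HPD a c nu nuF nuopt nfrac Hfr).
- exact: (@part3 R k calI Sigma HS HPD a c nu hc a0 nuF nuopt nfrac nint Hfr Hint).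
Qed.
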